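(* Suppose $D\subset\mathbb{R}^d$ is a $\kappa$-fat open set with localization constant $R_0$ and $\dim_{\rm A}(\partial D)<d$, and let $\gamma:=d-\dim_{\rm A}(\partial D)$. For any $q\in[0,\gamma)$ there exists $C=C(q)>0$ such that $$m_d\big(\{y\in B(x,r)\cap\overline D:\delta_D(y)<s\}\big)\le Cs^q(s\vee r)^{d-q}\quad\text{for all }x\in\overline D\text{ and }r,s>0.$$
   Context: $m_d$ is $d$-dimensional Lebesgue measure; $\delta_D(x)=\mathrm{dist}(x,\partial D)$. For nonempty $E\subset\mathbb{R}^d$, $\dim_{\rm A}(E)$ is the infimum of all $\lambda>0$ for which there is $C$ such that for all $x\in E$ and $0<s\le r<\mathrm{diam}(E)$, $B(x,r)\cap E$ can be covered by at most $C(r/s)^\lambda$ open balls of radius $s$ centered in $E$. For $\kappa\in(0,1)$, $D$ open is $\kappa$-fat with localization constant $R_0\in(0,\mathrm{diam}(D)]$ if for every $x\in\overline D$ and $r\in(0,R_0)$ there is $z\in D$ with $B(z,\kappa r)\subset D\cap B(x,r)$. *)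

(* Defs.v *)
From HB Require Import structures.
From mathcomp Require Import all_boot all_order all_algebra.
From mathcomp Require Import all_classical all_reals all_analysis.
Set Implicit Arguments. Unset Strict Implicit. Unset Printing Implicit Defensive.
Import Order.TTheory GRing.Theory Num.Theory.
Import numFieldNormedType.Exports.
Local Open Scope classical_set_scope.
Local Open Scope ring_scope.

Section Defs.
Variables (R : realType) (d : nat).
Notation V := 'rV[R]_d.

Definition edist (x y : V) : R :=
  Num.sqrt (\sum_(i < d) (x ord0 i - y ord0 i) ^+ 2).

Definition eball (x : V) (r : R) : set V := [set y | edist x y < r].

(* diameter (extended real, +oo for unbounded sets, -oo for the empty set) *)
Definition ediam (E : set V) : \bar R :=
  ereal_sup [set (edist x y)%:E | x in E & y in E].

Definition bdry (D : set V) : set V := closure D `\` interior D.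

(* delta_D(y) = dist(y, boundary D) (+oo if the boundary is empty) *)
Definition delta (D : set V) (y : V) : \bar R :=
  ereal_inf [set (edist y z)%:E | z in bdry D].

Definition assouad_cover (E : set V) (lam : R) : Prop :=
  exists C : R, forall x, E x -> forall s r : R, 0 < s -> s <= r ->
    (r%:E < ediam E)%E ->
    exists c : seq V, (forall z, z \in c -> E z) /\
      (size c)%:R <= C * powR (r / s) lam /\
      eball x r `&` E `<=` \bigcup_(z in [set z | z \in c]) eball z s.

Definition assouad_dim (E : set V) : \bar R :=
  ereal_inf [set lam%:E | lam in [set lam : R | 0 < lam /\ assouad_cover E lam]].

Definition kappa_fat (kappa R0 : R) (D : set V) : Prop :=
  open D /\ 0 < kappa < 1 /\ 0 < R0 /\ (R0%:E <= ediam D)%E /\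
  forall x, closure D x -> forall r, 0 < r -> r < R0 ->
    exists z, D z /\ eball z (kappa * r) `<=` D `&` eball x r.

Definition box (a b : V) : set V :=
  [set y | forall i, a ord0 i <= y ord0 i <= b ord0 i].
Definition boxvol (a b : V) : R := \prod_(i < d) (b ord0 i - a ord0 i).

Definition leb_measure (A : set V) : \bar R :=
  ereal_inf [set v | exists a b : nat -> V,
     (forall k i, a k ord0 i <= b k ord0 i) /\
     A `<=` \bigcup_k box (a k) (b k) /\
     v = (\sum_(0 <= k <oo) (boxvol (a k) (b k))%:E)%E].
End Defs.

(* Main.v *)
Require Import Defs.
From HB Require Import structures.
From mathcomp Require Import all_boot all_order all_algebra.
From mathcomp Require Import all_classical all_reals all_analysis.
From mathcomp Require Import ring lra.
Import Order.TTheory GRing.Theory Num.Theory.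
Import numFieldNormedType.Exports.
Local Open Scope classical_set_scope.
Local Open Scope ring_scope.

Set Implicit Arguments. Unset Strict Implicit.



Section Aux.
Variables (R : realType) (d : nat).
Notation V := 'rV[R]_d.
Local Notation ed := (@Defs.edist R d).

Lemma ed_ge0 (x y : V) : 0 <= ed x y. Proof. exact: sqrtr_ge0. Qed.

Lemma ed_sym (x y : V) : ed x y = ed y x.
Proof. rewrite /Defs.edist; congr Num.sqrt; apply: eq_bigr => i _; by rewrite -sqrrN opprB. Qed.

Lemma ed_xx (x : V) : ed x x = 0.
Proof. rewrite /Defs.edist big1 ?sqrtr0 // => i _; by rewrite subrr expr2 mulr0. Qed.

Lemma coord_le (x y : V) i : `|x ord0 i - y ord0 i| <= ed x y.
Proof.
rewrite /Defs.edist -sqrtr_sqr ler_sqrt; last by apply: sumr_ge0 => j _; exact: sqr_ge0.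
rewrite (bigD1 i) //= lerDl; apply: sumr_ge0 => j _; exact: sqr_ge0.
Qed.

Lemma sum_expand (a b : 'I_d -> R) (A B : R) :
  \sum_i (B * a i - A * b i) ^+ 2 =
  B ^+ 2 * \sum_i a i ^+ 2 - 2 * A * B * \sum_i a i * b i + A ^+ 2 * \sum_i b i ^+ 2.
Proof. rewrite !mulr_sumr -sumrB -big_split /=; apply: eq_bigr => i _; ring. Qed.

Lemma CS (a b : 'I_d -> R) :
  \sum_i a i * b i <= Num.sqrt (\sum_i a i ^+ 2) * Num.sqrt (\sum_i b i ^+ 2).
Proof.
have ha : 0 <= \sum_i a i ^+ 2 by apply: sumr_ge0 => j _; exact: sqr_ge0.
have hb : 0 <= \sum_i b i ^+ 2 by apply: sumr_ge0 => j _; exact: sqr_ge0.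
have := sum_expand a b (Num.sqrt (\sum_i a i ^+ 2)) (Num.sqrt (\sum_i b i ^+ 2)).
have hA := sqr_sqrtr ha; have hB := sqr_sqrtr hb.
move: (Num.sqrt (\sum_i a i ^+ 2)) (Num.sqrt (\sum_i b i ^+ 2)) hA hB (sqrtr_ge0 (\sum_i a i ^+ 2)) (sqrtr_ge0 (\sum_i b i ^+ 2)).
move=> A B hA hB A0 B0 e.
have h0 : 0 <= \sum_i (B * a i - A * b i) ^+ 2 by apply: sumr_ge0 => j _; exact: sqr_ge0.
rewrite e in h0.
have [Az|Ap] := eqVneq A 0.
  have sa : \sum_i a i ^+ 2 = 0 by rewrite -hA Az expr2 mulr0.
  rewrite Az mul0r big1 // => i _.
  have := psumr_eq0P (P := xpredT) (fun j _ => sqr_ge0 (a j)) sa (i := i) isT.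
  by move/eqP; rewrite sqrf_eq0 => /eqP ->; rewrite mul0r.
have [Bz|Bp] := eqVneq B 0.
  have sb : \sum_i b i ^+ 2 = 0 by rewrite -hB Bz expr2 mulr0.
  rewrite Bz mulr0 big1 // => i _.
  have := psumr_eq0P (P := xpredT) (fun j _ => sqr_ge0 (b j)) sb (i := i) isT.
  by move/eqP; rewrite sqrf_eq0 => /eqP ->; rewrite mulr0.
have Ap' : 0 < A by rewrite lt_neqAle eq_sym Ap A0.
have Bp' : 0 < B by rewrite lt_neqAle eq_sym Bp B0.
have AB : 0 < A * B by apply: mulr_gt0.
move: h0; rewrite -hA -hB.
move: (\sum_i a i * b i) => S h0.
nra.
Qed.

Lemma ed_tri (x y z : V) : ed x z <= ed x y + ed y z.
Proof.
have h1 := CS (fun i => x ord0 i - y ord0 i) (fun i => y ord0 i - z ord0 i).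
rewrite -/(ed x y) -/(ed y z) in h1.
rewrite /Defs.edist -[X in _ <= X]ger0_norm ?addr_ge0 ?sqrtr_ge0 //.
rewrite -sqrtr_sqr ler_sqrt; last exact: sqr_ge0.
rewrite sqrrD !sqr_sqrtr; try by apply: sumr_ge0 => j _; exact: sqr_ge0.
rewrite -/(ed x y) -/(ed y z).
have -> : \sum_i (x ord0 i - z ord0 i) ^+ 2 =
   \sum_i (x ord0 i - y ord0 i) ^+ 2 + (\sum_i (x ord0 i - y ord0 i) * (y ord0 i - z ord0 i)) *+ 2
   + \sum_i (y ord0 i - z ord0 i) ^+ 2.
  rewrite -sumrMnl -!big_split /=; apply: eq_bigr => i _; ring.
by rewrite lerD2r lerD2l lerMn2r.
Qed.

Lemma ed_le_coord (x y : V) e : 0 <= e -> (forall i, `|x ord0 i - y ord0 i| <= e) -> ed x y <= d%:R * e.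
Proof.
move=> e0 h.
rewrite /Defs.edist -[X in _ <= X]ger0_norm ?mulr_ge0 ?ler0n //.
rewrite -sqrtr_sqr ler_sqrt; last exact: sqr_ge0.
apply: (@le_trans _ _ (\sum_(i < d) e ^+ 2)).
  apply: ler_sum => i _; have := h i; rewrite ler_norml => /andP [h1 h2]; nra.
rewrite sumr_const card_ord -mulr_natl.
have : 0 <= d%:R * e ^+ 2 * (d%:R - 1 :> R).
  case: d => [|n]; first by rewrite mul0r mul0r.
  by rewrite !mulr_ge0 ?sqr_ge0 // -natr1 addrK.
move=> H; nra.
Qed.

End Aux.



Section Aux2.
Variables (R : realType) (d : nat).
Notation V := 'rV[R]_d.
Local Notation ed := (@Defs.edist R d).

Lemma leb_cover (A : set V) (c : seq V) (t : R) : (0 < d)%N -> 0 < t ->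
  A `<=` \bigcup_(z in [set z | z \in c]) eball z t ->
  (leb_measure A <= ((size c)%:R * (2 * t) ^+ d)%:E)%E.
Proof.
move=> d0 t0 Ac.
pose a k : V := if (k < size c)%N then nth 0 c k - const_mx t else 0.
pose b k : V := if (k < size c)%N then nth 0 c k + const_mx t else 0.
apply: (@le_trans _ _ (\sum_(0 <= k <oo) (boxvol (a k) (b k))%:E)%E).
  apply: ereal_inf_lbound; exists a, b; split; [|split] => //.
  - move=> k i; rewrite /a /b; case: ifP => _ //; rewrite !mxE; lra.
  - move=> y /Ac [z zc yz]; exists (index z c) => //.
    rewrite /box /a /b index_mem zc nth_index // => i; rewrite !mxE.
    have := coord_le z y i; rewrite /eball /= in yz.
    rewrite ler_norml => /andP [h1 h2]; apply/andP; split; lra.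
rewrite (nneseries_split_cond 0 (size c)); last first.
  move=> k _; rewrite lee_fin /boxvol; apply: prodr_ge0 => i _.
  rewrite /a /b; case: ifP => _; rewrite !mxE; lra.
rewrite eseries0 ?adde0; last first.
  move=> k /= hk _; rewrite /boxvol /a /b ltnNge hk /= (eq_bigr (fun=> 0)); last first.
    by move=> i _; rewrite !mxE subrr.
  by rewrite prodr_const card_ord expr0n (negbTE (lt0n_neq0 d0)).
rewrite add0n sumEFin lee_fin big_nat_cond.
rewrite (eq_bigr (fun=> (2 * t) ^+ d)); last first.
  move=> k /andP [/andP [_ hk] _]; rewrite /boxvol /a /b hk.
  rewrite (eq_bigr (fun=> 2 * t)) ?prodr_const ?card_ord // => i _; rewrite !mxE; ring.
by rewrite -big_nat_cond sumr_const_nat subn0 (mulr_natl ((2*t)^+d) (size c)).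
Qed.

Lemma eball_open (x : V) r : open (eball x r).
Proof.
rewrite openE => y /= hy; rewrite /interior; apply/nbhs_ballP.
have he : 0 < r - ed x y by rewrite subr_gt0.
exists ((r - ed x y) / (d.+1)%:R); first by apply: divr_gt0.
move=> z; rewrite mx_norm_ball /= => hz.
rewrite /eball /=; apply: (le_lt_trans (ed_tri x y z)).
have : ed y z <= d%:R * ((r - ed x y) / (d.+1)%:R).
  apply: ed_le_coord; first by apply: divr_ge0; [lra|].
  move=> i; apply: (le_trans _ (ltW hz)).
  rewrite -[X in _ <= X]/(mx_norm (y - z)) mx_normrE.
  have -> : y ord0 i - z ord0 i = (y - z) (@ord0 0, i).1 (@ord0 0, i).2 by rewrite /= !mxE.
  exact: (le_bigmax _ _ (@ord0 0, i)).
have : d%:R * ((r - ed x y) / (d.+1)%:R) < r - ed x y.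
  rewrite mulrA ltr_pdivrMr ?ltr0n // mulrC ltr_pM2l // ltr_nat //.
move=> h2 h1; have h3 := le_lt_trans h1 h2; lra.
Qed.

Lemma ediam_ub (E : set V) (x y : V) : E x -> E y -> ((ed x y)%:E <= ediam E)%E.
Proof. by move=> Ex Ey; apply: ereal_sup_ubound; exists x => //; exists y. Qed.

Lemma net (E : set V) (c : V) (M e : R) : 0 < e -> closed E ->
  (forall z, E z -> ed c z <= M) ->
  exists W : seq V, (forall w, w \in W -> E w) /\
    E `<=` \bigcup_(w in [set w | w \in W]) eball w e.
Proof.
move=> e0 cE bE.
have cpt : compact E.
  apply: (subclosed_compact cE (@rV_compact _ _ (fun i => `[c ord0 i - M, c ord0 i + M]%classic) _)).
  - by move=> i; apply: segment_compact.
  - move=> z /bE h i /=; rewrite in_itv /=; have := coord_le c z i.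
    rewrite ler_norml => /andP [h1 h2]; apply/andP; split; lra.
move: cpt; rewrite compact_cover => /(_ V E (fun w => eball w e)).
case.
- by move=> w _; exact: eball_open.
- by move=> z Ez; exists z => //; rewrite /eball /= ed_xx.
move=> D' D'E cov; exists (finmap.enum_fset D'); split.
- by move=> w wD; rewrite -in_setE; apply: D'E; exact wD.
- by move=> z /cov [w wD hw]; exists w; first exact wD.
Qed.

End Aux2.


Lemma key (R : realType) (a s rho lam q : R) (n : nat) : 1 <= a -> 0 < s -> s <= rho ->
  0 <= lam -> 0 <= q -> q + lam <= n%:R ->
  powR (a * rho / s) lam * (a * s) ^+ n <= powR a lam * a ^+ n * (powR s q * powR rho (n%:R - q)).
Proof.
move=> a1 s0 srho lam0 q0 ql.
have a0 : 0 <= a by lra.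
have sn : s != 0 by rewrite gt_eqF.
set k := rho / s.
have k1 : 1 <= k by rewrite /k ler_pdivlMr // mul1r.
have k0 : 0 <= k by lra.
have -> : rho = s * k by rewrite /k mulrC divfK.
have -> : a * (s * k) / s = a * k by field.
rewrite (powRM _ a0 k0) (powRM _ (ltW s0) k0) exprMn.
rewrite [powR s q * _]mulrA -powRD; last by rewrite sn implybT.
have -> : q + (n%:R - q) = n%:R by ring.
rewrite (powR_mulrn _ (ltW s0)).
have hk : powR k lam <= powR k (n%:R - q) by apply: ler_powR => //; lra.
have -> : powR a lam * powR k lam * (a ^+ n * s ^+ n) = (powR a lam * a ^+ n * s ^+ n) * powR k lam by ring.
have -> : powR a lam * a ^+ n * (s ^+ n * powR k (n%:R - q)) = (powR a lam * a ^+ n * s ^+ n) * powR k (n%:R - q) by ring.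
apply: ler_wpM2l => //.
by rewrite !mulr_ge0 ?powR_ge0 ?exprn_ge0 // ltW.
Qed.

Lemma size_flatten_le (R : realType) (T U : eqType) (W : seq T) (f : T -> seq U) (B : R) :
  (forall w, w \in W -> (size (f w))%:R <= B) ->
  (size (flatten (map f W)))%:R <= (size W)%:R * B.
Proof.
elim: W => [|w W IH] h /=; first by rewrite mul0r.
rewrite size_cat natrD -addn1 natrD mulrDl mul1r [X in _ <= X]addrC.
apply: lerD; first by apply: h; rewrite mem_head.
by apply: IH => v vW; apply: h; rewrite inE vW orbT.
Qed.

Unset Implicit Arguments. Set Strict Implicit.


Theorem proposition2p4 (R : realType) (d : nat) (D : set 'rV[R]_d)
    (kappa R0 : R) :
  (0 < d)%N ->
  kappa_fat kappa R0 D ->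
  (assouad_dim (bdry D) < (d%:R : R)%:E)%E ->
  forall q : R, 0 <= q ->
    (q%:E < (d%:R : R)%:E - assouad_dim (bdry D))%E ->
  exists C : R, 0 < C /\
    forall (x : 'rV[R]_d), closure D x -> forall r s : R, 0 < r -> 0 < s ->
      (leb_measure [set y | eball x r y /\ closure D y /\ (delta D y < s%:E)%E]
        <= (C * powR s q * powR (Num.max s r) (d%:R - q))%:E)%E.
Proof.
move=> d0 _ dimlt q q0 qlt.
set E := bdry D.
have [lam [lam0 [[Cc covC] lamq]]] :
    exists lam : R, 0 < lam /\ assouad_cover E lam /\ lam < d%:R - q.
  have : (assouad_dim E < (d%:R - q)%:E)%E.
    move: qlt dimlt; case: (assouad_dim E) => [r| |].
    - rewrite -EFinB !lte_fin => h _; lra.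
    - by move=> _; rewrite ltNge leey.
    - by move=> _ _; rewrite ltNyr.
  case/ereal_inf_lt => _ [l [l0 cl] <-]; rewrite lte_fin => ll.
  by exists l.
pose K0 := `|Cc| + 1.
have K0pos : 0 < K0 by rewrite /K0; have := normr_ge0 Cc; lra.
have sizeK : forall (n : nat) (P : R), 0 <= P -> n%:R <= Cc * P -> n%:R <= K0 * P.
  move=> n P P0 h; apply: (le_trans h); apply: ler_wpM2r => //.
  rewrite /K0; have := ler_norm Cc; lra.
have [W [WE Wcov]] : exists W : seq 'rV[R]_d, (forall w, w \in W -> E w) /\
   (forall dl : R, Defs.ediam E = dl%:E -> 0 < dl ->
      E `<=` \bigcup_(w in [set w | w \in W]) eball w (dl / 2)).
  case: (pselect (exists dl : R, Defs.ediam E = dl%:E /\ 0 < dl)); last first.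
    move=> nd; exists [::]; split => // dl hdl dl0; exfalso; apply: nd; by exists dl.
  case=> dl [hdl dl0].
  have [z0 Ez0] : exists z0, E z0.
    apply: contrapT => nE.
    have e0 : [set (Defs.edist x y)%:E | x in E & y in E] = set0.
      apply/seteqP; split => // z [x Ex _]; exfalso; apply: nE; by exists x.
    by move: hdl; rewrite /Defs.ediam e0 ereal_sup0.
  have cE : closed E.
    rewrite /E /bdry setDE; apply: closedI; first exact: closed_closure.
    by rewrite closedC; exact: open_interior.
  have [W [WE Wc]] := @net R d E z0 dl (dl / 2) (divr_gt0 dl0 (ltr0Sn _ 1)) cE
    (fun z Ez => (let h := ediam_ub Ez0 Ez in ltac:(by move: h; rewrite hdl lee_fin))).
  exists W; split => // dl' hdl' _.
  by move: hdl'; rewrite hdl => -[<-].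
pose C := ((size W)%:R + 1) * K0 * powR 4 lam * 4 ^+ d + 18 ^+ d.
have Cpos : 0 < C.
  rewrite /C; apply: ltr_wpDl; last by apply: exprn_gt0.
  by rewrite !mulr_ge0 ?powR_ge0 ?exprn_ge0 // ?ltW // addr_ge0.
exists C; split => // x cx r s r0 s0.
set rho := Num.max s r.
have srho : s <= rho by rewrite /rho le_max lexx.
have rrho : r <= rho by rewrite /rho le_max lexx orbT.
set X := powR s q * powR rho (d%:R - q).
have X0 : 0 <= X by rewrite /X mulr_ge0 ?powR_ge0.
rewrite -mulrA -/X.
set T := K0 * (powR 4 lam * 4 ^+ d * X).
have T0 : 0 <= T by rewrite /T !mulr_ge0 ?powR_ge0 ?exprn_ge0 // ltW.
have sW0 : 0 <= (size W)%:R :> R by [].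
have F0 : 0 <= 18 ^+ d * X :> R by rewrite mulr_ge0 ?exprn_ge0.
have CX : C * X = ((size W)%:R + 1) * T + 18 ^+ d * X by rewrite /C /T; ring.
have TC : T <= C * X by rewrite CX; nra.
have sWTC : (size W)%:R * T <= C * X by rewrite CX; nra.
have FC : 18 ^+ d * X <= C * X by rewrite CX; nra.
set S_ := [set y | _ ].
case: (pselect (exists y, S_ y)) => [[y0 [y0x [_ y0d]]] | nS]; last first.
  apply: (le_trans (@leb_cover R d S_ [::] 1 d0 ltr01 _)).
    move=> y Sy; exfalso; apply: nS; by exists y.
  by rewrite /= mul0r lee_fin mulr_ge0 // ltW.
have [w0 Ew0 y0w0] : exists2 w, E w & Defs.edist y0 w < s.
  move: y0d; rewrite /Defs.delta => /ereal_inf_lt [_ [w Ew <-]].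
  by rewrite lte_fin => h; exists w.
have near : forall y, S_ y -> exists2 w, E w & Defs.edist y w < s /\ Defs.edist w0 w < 4 * rho.
  move=> y [yx [_ yd]].
  move: yd; rewrite /Defs.delta => /ereal_inf_lt [_ [w Ew <-]]; rewrite lte_fin => yw.
  exists w => //; split => //.
  have t1 := ed_tri w0 y0 w. have t2 := ed_tri y0 x w. have t3 := ed_tri x y w.
  have e1 := ed_sym w0 y0. have e2 := ed_sym y0 x.
  rewrite /eball /= in yx y0x.
  lra.
have [hA|hB] := boolP ((4 * rho)%:E < Defs.ediam E)%E.
  have [c [cE [csz ccov]]] := covC w0 Ew0 s (4 * rho) s0 (ltac:(lra)) hA.
  apply: (le_trans (@leb_cover R d S_ c (2 * s) d0 _ _)).
  - by apply: mulr_gt0.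
  - move=> y /near [w Ew [yw w0w]].
    have : (eball w0 (4 * rho) `&` E) w by split.
    move=> /ccov [z zc zw]; exists z => //.
    rewrite /eball /= in zw *; have := ed_tri z w y; rewrite (ed_sym w y); lra.
  rewrite lee_fin.
  have P0 : 0 <= powR (4 * rho / s) lam := powR_ge0 _ _.
  have hsz := sizeK _ _ P0 csz.
  have hk := @key R 4 s rho lam q d (ltac:(lra)) s0 srho (ltW lam0) q0 (ltac:(lra)).
  have -> : 2 * (2 * s) = 4 * s by ring.
  have Q0 : 0 <= (4 * s) ^+ d by rewrite exprn_ge0 // mulr_ge0 // ltW.
  apply: (le_trans (ler_wpM2r Q0 hsz)).
  rewrite -[K0 * _ * _]mulrA.
  apply: (le_trans (ler_wpM2l (ltW K0pos) hk)); exact: TC.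
move: hB; rewrite -leNgt => hB.
have dge0 : (0 <= Defs.ediam E)%E by have := ediam_ub Ew0 Ew0; rewrite ed_xx.
case hE: (Defs.ediam E) => [dl| |]; rewrite hE in hB dge0; last 2 first.
- by move: hB; rewrite leye_eq.
- by move: dge0; rewrite leeNy_eq.
rewrite lee_fin in hB dge0.
have [hB1|hB2] := lerP dl (8 * s).
  apply: (le_trans (@leb_cover R d S_ [:: w0] (9 * s) d0 _ _)).
  - by apply: mulr_gt0.
  - move=> y /near [w Ew [yw _]]; exists w0; first by rewrite /= mem_head.
    rewrite /eball /=; have := ediam_ub Ew0 Ew; rewrite hE lee_fin => hw.
    have := ed_tri w0 w y; rewrite (ed_sym w y); lra.
  rewrite lee_fin /= mul1r.
  have hk := @key R 18 s rho 0 q d (ltac:(lra)) s0 srho (lexx 0) q0 (ltac:(lra)).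
  rewrite !powRr0 !mul1r in hk.
  have -> : 2 * (9 * s) = 18 * s by ring.
  apply: (le_trans hk); exact: FC.
have dl0 : 0 < dl by lra.
have Wc := Wcov dl hE dl0.
have /choice [f hf] : forall w : 'rV[R]_d, exists c : seq 'rV[R]_d, w \in W ->
    ((size c)%:R <= K0 * powR (dl / 2 / s) lam /\
     eball w (dl / 2) `&` E `<=` \bigcup_(z in [set z | z \in c]) eball z s).
  move=> w; case: (boolP (w \in W)) => wW; last by exists [::].
  have [c [_ [csz ccov]]] := covC w (WE w wW) s (dl / 2) s0 (ltac:(lra))
    (ltac:(rewrite hE lte_fin; lra)).
  exists c => _; split => //; apply: sizeK => //; exact: powR_ge0.
apply: (le_trans (@leb_cover R d S_ (flatten (map f W)) (2 * s) d0 _ _)).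
- exact: mulr_gt0.
- move=> y /near [w Ew [yw _]].
  have [w1 w1W w1w] := Wc w Ew.
  have [sz cov1] := hf w1 w1W.
  have [z zc zw] := cov1 w (conj w1w Ew).
  exists z; first by apply/flatten_mapP; exists w1.
  rewrite /eball /= in zw *; have := ed_tri z w y; rewrite (ed_sym w y); lra.
rewrite lee_fin.
have hsz : (size (flatten (map f W)))%:R <= (size W)%:R * (K0 * powR (dl / 2 / s) lam).
  by apply: size_flatten_le => w wW; exact: (hf w wW).1.
have hP : powR (dl / 2 / s) lam <= powR (4 * rho / s) lam.
  apply: (ge0_ler_powR (ltW lam0)); rewrite ?nnegrE.
  - apply: divr_ge0; [apply: divr_ge0|]; lra.
  - apply: divr_ge0; lra.
  - apply: ler_wpM2r; [rewrite invr_ge0; lra | lra].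
have hk := @key R 4 s rho lam q d (ltac:(lra)) s0 srho (ltW lam0) q0 (ltac:(lra)).
have -> : 2 * (2 * s) = 4 * s by ring.
have Q0 : 0 <= (4 * s) ^+ d by rewrite exprn_ge0 // mulr_ge0 // ltW.
have h1 := ler_wpM2r Q0 hsz.
have h2 : (size W)%:R * (K0 * powR (dl / 2 / s) lam) * (4 * s) ^+ d <=
          (size W)%:R * (K0 * powR (4 * rho / s) lam) * (4 * s) ^+ d.
  by apply: ler_wpM2r => //; apply: ler_wpM2l => //; apply: ler_wpM2l => //; exact: ltW.
have h3 : (size W)%:R * (K0 * powR (4 * rho / s) lam) * (4 * s) ^+ d <= (size W)%:R * T.
  have -> : (size W)%:R * (K0 * powR (4 * rho / s) lam) * (4 * s) ^+ d =
            (size W)%:R * (K0 * (powR (4 * rho / s) lam * (4 * s) ^+ d)) by ring.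
  by apply: ler_wpM2l => //; apply: ler_wpM2l => //; exact: ltW.
apply: (le_trans h1); apply: (le_trans h2); apply: (le_trans h3); exact: sWTC.
Qed.
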